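(* Let $H$ be a Hopf algebra over a field $k$, $(d,\Omega)$ a left-covariant FODC over $H$, and $X\in\Omega^\ast=\operatorname{Hom}_{-H}(\Omega,H)$ with $\rho(X)(a)=X(da)$. Consider the conditions (A) $\rho(X)=(I\otimes\varepsilon)\circ(I\otimes\rho(X))\circ\Delta$, i.e. $\rho(X)(a)=\sum a_1\,\varepsilon(\rho(X)(a_2))$ for all $a\in H$; (B) $\rho(X)\circ L=L\circ\rho(X)$ for every left translation $L$ of $H$. Then (A) implies (B). If moreover $\operatorname{Alg}(H,k)$ separates the elements of $H$ (for all $a\neq b$ in $H$ there is $\varphi\in\operatorname{Alg}(H,k)$ with $\varphi(a)\neq\varphi(b)$), then (B) implies (A), so (A) and (B) are equivalent.
   Context: A FODC over $H$ is a pair $(d,\Omega)$ with $\Omega$ an $H$-bimodule, $d\colon H\to\Omega$ a derivation, and $\Omega$ generated as bimodule by $d(H)$; left-covariant means there is $\Delta_l\colon\Omega\to H\otimes\Omega$ with $\Delta_l\circ d=(I\otimes d)\circ\Delta$ and $(\varepsilon\otimes I)\circ\Delta_l=I$. A left translation on $H$ is an algebra homomorphism $L\colon H\to H$ with $\Delta\circ L=(L\otimes I)\circ\Delta$; these are exactly the maps $(\varphi\otimes I)\circ\Delta$ with $\varphi\in\operatorname{Alg}(H,k)$, the unital algebra homomorphisms $H\to k$. *)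

(* Defs.v *)
(* Elements of a tensor product U (x) V are
   represented by finite sums of simple tensors (seq (U * V)); two such
   representations denote the same tensor iff every bilinear map out of
   U * V (into any k-vector space) takes the same value on them
   (universal property of the tensor product). *)
From HB Require Import structures.
From mathcomp Require Import all_boot all_order all_algebra.
Set Implicit Arguments. Unset Strict Implicit. Unset Printing Implicit Defensive.
Import Order.TTheory GRing.Theory Num.Theory.
Local Open Scope ring_scope.

Section Tensors.
Variable k : fieldType.

Definition klin (U V : lmodType k) (f : U -> V) : Prop :=
  forall (c : k) (x y : U), f (c *: x + y) = c *: f x + f y.

Definition kform (U : lmodType k) (f : U -> k) : Prop :=
  forall (c : k) (x y : U), f (c *: x + y) = c * f x + f y.

Definition bilin (U V W : lmodType k) (f : U -> V -> W) : Prop :=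
  (forall y, klin (fun x => f x y)) /\ (forall x, klin (f x)).

Definition trilin (U V Z W : lmodType k) (f : U -> V -> Z -> W) : Prop :=
  (forall y z, klin (fun x => f x y z)) /\ (forall x z, klin (fun y => f x y z))
  /\ (forall x y, klin (f x y)).

Definition tev (U V W : lmodType k) (f : U -> V -> W) (t : seq (U * V)) : W :=
  \sum_(p <- t) f p.1 p.2.

Definition tensor_eq (U V : lmodType k) (t1 t2 : seq (U * V)) : Prop :=
  forall (W : lmodType k) (f : U -> V -> W), bilin f -> tev f t1 = tev f t2.

(* a k-linear map U -> V (x) Z, given by representatives *)
Definition tlin (U V Z : lmodType k) (D : U -> seq (V * Z)) : Prop :=
  forall (c : k) (x y : U),
    tensor_eq (D (c *: x + y)) ([seq (c *: p.1, p.2) | p <- D x] ++ D y).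

End Tensors.

Section Hopf.
Variables (k : fieldType) (H : algType k).

Definition alg_hom_k (phi : H -> k) : Prop :=
  kform phi /\ (forall x y, phi (x * y) = phi x * phi y) /\ phi 1 = 1.

Definition is_hopf (cop : H -> seq (H * H)) (eps : H -> k) : Prop :=
  tlin cop /\
      (forall x y, tensor_eq (cop (x * y))
                     [seq (p.1 * q.1, p.2 * q.2) | p <- cop x, q <- cop y]) /\
      tensor_eq (cop 1) [:: (1, 1)] /\
      (* coassociativity (Delta (x) I) Delta = (I (x) Delta) Delta *)
      (forall (W : lmodType k) (f : H -> H -> H -> W), trilin f ->
         forall a, \sum_(p <- cop a) \sum_(q <- cop p.1) f q.1 q.2 p.2
                 = \sum_(p <- cop a) \sum_(q <- cop p.2) f p.1 q.1 q.2) /\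
      alg_hom_k eps /\
      (forall a, \sum_(p <- cop a) eps p.1 *: p.2 = a) /\
      (forall a, \sum_(p <- cop a) eps p.2 *: p.1 = a) /\
      exists S : H -> H, klin S /\
        (forall a, \sum_(p <- cop a) S p.1 * p.2 = eps a *: 1) /\
        (forall a, \sum_(p <- cop a) p.1 * S p.2 = eps a *: 1).

Definition left_translation (cop : H -> seq (H * H)) (L : H -> H) : Prop :=
  [/\ klin L, (forall x y, L (x * y) = L x * L y), L 1 = 1 &
      forall a, tensor_eq (cop (L a)) [seq (L p.1, p.2) | p <- cop a]].

Definition is_FODC (Omega : lmodType k) (la : H -> Omega -> Omega)
    (ra : Omega -> H -> Omega) (d : H -> Omega) : Prop :=
      (bilin la /\ bilin ra) /\
      (forall x y w, la (x * y) w = la x (la y w)) /\ (forall w, la 1 w = w) /\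
      (forall x y w, ra w (x * y) = ra (ra w x) y) /\ (forall w, ra w 1 = w) /\
      (forall x y w, la x (ra w y) = ra (la x w) y) /\
      (klin d /\ (forall x y, d (x * y) = la x (d y) + ra (d x) y)) /\
      forall w, exists s : seq (H * H * H),
        w = \sum_(t <- s) la t.1.1 (ra (d t.1.2) t.2).

Definition left_covariant (cop : H -> seq (H * H)) (eps : H -> k)
    (Omega : lmodType k) (d : H -> Omega) : Prop :=
  exists Dl : Omega -> seq (H * Omega),
    [/\ tlin Dl,
        (forall a, tensor_eq (Dl (d a)) [seq (p.1, d p.2) | p <- cop a]) &
        (forall w, \sum_(p <- Dl w) eps p.1 *: p.2 = w)].

Definition right_H_hom (Omega : lmodType k) (ra : Omega -> H -> Omega)
    (X : Omega -> H) : Prop :=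
  (forall w1 w2, X (w1 + w2) = X w1 + X w2) /\
  (forall w h, X (ra w h) = X w * h).

Definition rho (Omega : lmodType k) (d : H -> Omega) (X : Omega -> H) : H -> H :=
  fun a => X (d a).

Definition alg_separates : Prop :=
  forall a b : H, a <> b -> exists phi : H -> k, alg_hom_k phi /\ phi a <> phi b.

End Hopf.

(* Main.v *)
Require Import Defs.
From HB Require Import structures.
From mathcomp Require Import all_boot all_order all_algebra.
Import GRing.Theory.
Local Open Scope ring_scope.

Set Implicit Arguments.
Section Aux.
Variable k : fieldType.

Lemma klin0 (U V : lmodType k) (f : U -> V) : klin f -> f 0 = 0.
Proof.
move=> h; have E := h 1 0 0; rewrite !scale1r addr0 in E.
have: f 0 + f 0 - f 0 = f 0 - f 0 by rewrite -E.
by rewrite addrK subrr.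
Qed.

Lemma klinZ (U V : lmodType k) (f : U -> V) : klin f ->
  forall c x, f (c *: x) = c *: f x.
Proof. by move=> h c x; have := h c x 0; rewrite !addr0 (klin0 h) addr0. Qed.

Lemma klinD (U V : lmodType k) (f : U -> V) : klin f ->
  forall x y, f (x + y) = f x + f y.
Proof. by move=> h x y; have := h 1 x y; rewrite !scale1r. Qed.

Lemma klin_sum (U V : lmodType k) (f : U -> V) : klin f ->
  forall (I : Type) (s : seq I) (F : I -> U),
  f (\sum_(i <- s) F i) = \sum_(i <- s) f (F i).
Proof.
move=> h I s F; elim: s => [|x s IH]; first by rewrite !big_nil (klin0 h).
by rewrite !big_cons (klinD h) IH.
Qed.

Lemma kform0 (U : lmodType k) (f : U -> k) : kform f -> f 0 = 0.
Proof.
move=> h; have E := h 1 0 0; rewrite !scale1r addr0 mul1r in E.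
have: f 0 + f 0 - f 0 = f 0 - f 0 by rewrite -E.
by rewrite addrK subrr.
Qed.

Lemma kformZ (U : lmodType k) (f : U -> k) : kform f ->
  forall c x, f (c *: x) = c * f x.
Proof. by move=> h c x; have := h c x 0; rewrite !addr0 (kform0 h) addr0. Qed.

Lemma kformD (U : lmodType k) (f : U -> k) : kform f ->
  forall x y, f (x + y) = f x + f y.
Proof. by move=> h x y; have := h 1 x y; rewrite scale1r mul1r. Qed.

Lemma kform_sum (U : lmodType k) (f : U -> k) : kform f ->
  forall (I : Type) (s : seq I) (F : I -> U),
  f (\sum_(i <- s) F i) = \sum_(i <- s) f (F i).
Proof.
move=> h I s F; elim: s => [|x s IH]; first by rewrite !big_nil (kform0 h).
by rewrite !big_cons (kformD h) IH.
Qed.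

Lemma tev_klin (U V Z W : lmodType k) (f : V -> Z -> W) (D : U -> seq (V * Z)) :
  bilin f -> tlin D -> klin (fun x => tev f (D x)).
Proof.
move=> bf hD c x y /=.
rewrite (hD c x y _ f bf) /tev big_cat big_map /= scaler_sumr.
congr (_ + _); apply: eq_bigr => p _.
exact: (klinZ (proj1 bf p.2)).
Qed.

End Aux.

Theorem mainTheorem11 (k : fieldType) (H : algType k)
    (cop : H -> seq (H * H)) (eps : H -> k)
    (Omega : lmodType k) (la : H -> Omega -> Omega) (ra : Omega -> H -> Omega)
    (d : H -> Omega) (X : Omega -> H) :
  is_hopf cop eps ->
  is_FODC la ra d ->
  left_covariant cop eps d ->
  right_H_hom ra X ->
  let condA := forall a : H,
      rho d X a = \sum_(p <- cop a) eps (rho d X p.2) *: p.1 in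
  let condB := forall L : H -> H, left_translation cop L ->
      forall a : H, rho d X (L a) = L (rho d X a) in
  (condA -> condB) /\ (alg_separates H -> condB -> condA).
Proof.
move=> [hcop [hmul [h1 [hcoas [heps [hcu1 [hcu2 _]]]]]]].
move=> [[_ hra] [_ [_ [_ [hra1 [_ [[hd _] _]]]]]]] _ [hXadd hXra].
cbv zeta.
have hXZ : forall c w, X (c *: w) = c *: X w.
  move=> c w.
  have -> : c *: w = ra w (c *: 1) by rewrite (klinZ (proj2 hra w)) hra1.
  by rewrite hXra -scalerAr mulr1.
have hrho : klin (rho d X).
  by move=> c x y; rewrite /rho hd hXadd hXZ.
have her : kform (fun a => eps (rho d X a)).
  by move=> c x y /=; rewrite hrho (proj1 heps).
have erS : forall (I : Type) (s : seq I) F,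
    eps (rho d X (\sum_(i <- s) F i)) = \sum_(i <- s) eps (rho d X (F i)).
  move=> I s F; exact: (kform_sum her).
have erZ : forall c x, eps (rho d X (c *: x)) = c * eps (rho d X x).
  move=> c x; exact: (kformZ her).
split.
  move=> hA L [hL _ _ hLc] a.
  pose f := fun (x y : H) => eps (rho d X y) *: x.
  have bf : bilin f.
    split => [y|x] c u v; rewrite /f.
      by rewrite scalerDr !scalerA [_ * c]mulrC.
    by rewrite (her c u v) scalerDl scalerA.
  transitivity (tev f (cop (L a))); first exact: hA.
  rewrite (hLc a _ f bf) /tev big_map /= (hA a) (klin_sum hL).
  by apply: eq_bigr => p _; rewrite /f (klinZ hL).
move=> hsep hB a.
set R := \sum_(p <- cop a) eps (rho d X p.2) *: p.1.
case: (eqVneq (rho d X a) R) => // /eqP hne.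
have [phi [[hphik [hphim hphi1]] hneq]] := hsep _ _ hne.
exfalso; apply: hneq.
pose Lp := fun x => \sum_(p <- cop x) phi p.1 *: p.2.
pose g := fun (x y : H) => phi x *: y.
have bg : bilin g.
  split => [y|x] c u v; rewrite /g.
    by rewrite hphik scalerDl scalerA.
  by rewrite scalerDr !scalerA [_ * c]mulrC.
have hLp : left_translation cop Lp.
  split.
  - exact: (tev_klin bg hcop).
  - move=> x y; rewrite /Lp.
    have := hmul x y _ g bg; rewrite /tev => ->.
    rewrite big_allpairs_dep /= mulr_suml; apply: eq_bigr => p _.
    rewrite mulr_sumr; apply: eq_bigr => q _ /=.
    by rewrite /g hphim -scalerAl -scalerAr scalerA.
  - rewrite /Lp; have := h1 _ g bg; rewrite /tev => ->.
    by rewrite big_seq1 /g /= hphi1 scale1r.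
  - move=> b W f bf.
    have gl := tev_klin bf hcop.
    have gS : forall (I : Type) (s : seq I) F,
        tev f (cop (\sum_(i <- s) F i)) = \sum_(i <- s) tev f (cop (F i)).
      move=> I s F; exact: (klin_sum gl).
    have gZ : forall c x, tev f (cop (c *: x)) = c *: tev f (cop x).
      move=> c x; exact: (klinZ gl).
    have fS : forall z (I : Type) (s : seq I) F,
        f (\sum_(i <- s) F i) z = \sum_(i <- s) f (F i) z.
      move=> z I s F; exact: (klin_sum (proj1 bf z)).
    have fZ : forall z c x, f (c *: x) z = c *: f x z.
      move=> z c x; exact: (klinZ (proj1 bf z)).
    have trF : trilin (fun x y z => phi x *: f y z).
      split; [|split].
      - by move=> y z c u v /=; rewrite hphik scalerDl scalerA.
      - move=> x z c u v /=; rewrite (proj1 bf z c u v).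
        by rewrite scalerDr !scalerA [_ * c]mulrC.
      - move=> x y c u v /=; rewrite (proj2 bf y c u v).
        by rewrite scalerDr !scalerA [_ * c]mulrC.
    have coas := hcoas W _ trF b.
    rewrite [in RHS]/tev big_map /= /Lp gS.
    transitivity (\sum_(p <- cop b) \sum_(q <- cop p.2) phi p.1 *: f q.1 q.2).
      by apply: eq_bigr => p _; rewrite gZ /tev scaler_sumr.
    rewrite -coas; apply: eq_bigr => p _.
    by rewrite fS; apply: eq_bigr => q _; rewrite fZ.
have E := hB Lp hLp a.
have e1 : eps (Lp (rho d X a)) = phi (rho d X a).
  transitivity (phi (\sum_(p <- cop (rho d X a)) eps p.2 *: p.1));
    last by rewrite hcu2.
  rewrite /Lp (kform_sum (proj1 heps)) (kform_sum hphik).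
  by apply: eq_bigr => p _; rewrite (kformZ (proj1 heps)) (kformZ hphik) mulrC.
have e2 : eps (rho d X (Lp a)) = phi R.
  rewrite /Lp /R erS (kform_sum hphik).
  by apply: eq_bigr => p _; rewrite erZ (kformZ hphik) mulrC.
by rewrite -e1 -e2 E.
Qed.
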